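(* Let $f(X)=X^n+a_{n-1}X^{n-1}+\dots+a_1X+a_0\in A[X]$ with $n\geq 1$, $p\nmid n$ and $a_0\neq 0$. Write $l=v(a_0)$ and assume $v(a_{n-i})>il/n$ for all $i=1,\dots,n-1$. Then the number $R$ of roots of $f$ in $K^\ast=K\setminus\{0\}$ equals the number of roots of $X^n+a_0$ in $K^\ast$. Moreover, if $n\nmid l$ then $R=0$, and if $n\mid l$ then $R=\gcd(n,q-1)$ if $-\delta(a_0)$ is an $n$-th power in $\kappa$, and $R=0$ otherwise.
   Context: $K$ is a field complete with respect to a non-archimedean discrete valuation $v$, normalized by $v(\pi)=1$ for a uniformizer $\pi$ of the valuation ring $A=\{x\in K: v(x)\geq 0\}$; the residue field $\kappa=A/\pi A$ is finite with $q$ elements and characteristic $p$. For $a\in K^\ast$ with $v(a)=l$, the first non-zero digit of $a$ is $\delta(a)=\overline{a/\pi^l}\in\kappa^\ast$, the residue class of $a/\pi^l$. *)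

(* Defs.v *)
From HB Require Import structures.
From mathcomp Require Import all_boot all_order all_algebra all_field.
Set Implicit Arguments. Unset Strict Implicit. Unset Printing Implicit Defensive.
Import Order.TTheory GRing.Theory Num.Theory.
Local Open Scope ring_scope.

(* A complete discretely valued field K with valuation v : K -> int (the
   value at 0 is irrelevant, v 0 = +oo by convention, so every axiom is
   stated for nonzero arguments), uniformizer pi (v pi = 1), and residue
   field kappa = A / pi A, presented via the reduction map red : K -> kappa,
   which on A = {x | x = 0 \/ v x >= 0} is a surjective ring morphism whose
   kernel is pi A = {x | x = 0 \/ v x >= 1}. *)

Definition inA (K : fieldType) (v : K -> int) (x : K) : bool :=
  (x == 0) || (0 <= v x).

Definition vge (K : fieldType) (v : K -> int) (x : K) (N : int) : Prop :=
  x = 0 \/ N <= v x.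

Record cdvf (K : fieldType) (kappa : finFieldType) := CDVF {
  val_v : K -> int;
  unif : K;
  red : K -> kappa;
  v_mul : forall x y : K, x != 0 -> y != 0 -> val_v (x * y) = val_v x + val_v y;
  v_add : forall x y : K, x != 0 -> y != 0 -> x + y != 0 ->
            Num.min (val_v x) (val_v y) <= val_v (x + y);
  unif_neq0 : unif != 0;
  v_unif : val_v unif = 1;
  complete : forall u : nat -> K,
    (forall N : int, exists M : nat, forall m n : nat, (M <= m)%N -> (M <= n)%N ->
        vge val_v (u m - u n) N) ->
    exists L : K, forall N : int, exists M : nat, forall n : nat, (M <= n)%N ->
        vge val_v (u n - L) N;
  red_add : forall x y, inA val_v x -> inA val_v y -> red (x + y) = red x + red y;
  red_mul : forall x y, inA val_v x -> inA val_v y -> red (x * y) = red x * red y;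
  red_1 : red 1 = 1;
  red_surj : forall z : kappa, exists2 x, inA val_v x & red x = z;
  red_ker : forall x, inA val_v x -> (red x = 0 <-> vge val_v x 1)
}.

Definition delta K kappa (D : @cdvf K kappa) (a : K) : kappa :=
  red D (a / (unif D) ^ (val_v D a)).

Definition has_nonzero_roots (K : fieldType) (p : {poly K}) (N : nat) : Prop :=
  exists s : seq K, [/\ uniq s, forall x, (x \in s) = (x != 0) && root p x
                      & size s = N].

(* Main.v *)
Require Import Defs.
From HB Require Import structures.
From mathcomp Require Import all_boot all_order all_algebra all_field zify.
Import Order.TTheory GRing.Theory Num.Theory.
Local Open Scope ring_scope.
Set Implicit Arguments. Unset Strict Implicit. Unset Printing Implicit Defensive.

Lemma enum_lift (T : eqType) (S : finType) (rt : pred T) (phi : T -> S) (R : pred S) :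
 (forall z, R z -> exists x, rt x /\ phi x = z) ->
 {in rt &, injective phi} ->
 (forall x, rt x -> R (phi x)) ->
 exists s : seq T, [/\ uniq s, forall x, (x \in s) = rt x & size s = #|R|].
Proof.
move=> ex inj inR.
suff: forall zs : seq S, uniq zs -> all R zs -> exists s : seq T,
   [/\ uniq s, forall x, (x \in s) = rt x && (phi x \in zs) & size s = size zs].
  case/(_ (enum R) (enum_uniq _)).
    by apply/allP => z; rewrite mem_enum.
  move=> s [u m sz]; exists s; split=> //; last by rewrite sz cardE.
  by move=> x; rewrite m mem_enum; case h: (rt x) => //=; exact: inR.
elim=> [|z zs IH] /=.
  by move=> _ _; exists [::]; split=> // x; rewrite andbF.
case/andP=> zn u /andP[zR allR].
have [s [us ms ss]] := IH u allR.
have [x [rx px]] := ex z zR.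
exists (x :: s); split.
- by rewrite /= us andbT ms px (negbTE zn) andbF.
- move=> y; rewrite in_cons ms inE.
  apply/idP/idP.
  + case/orP=> [/eqP->|/andP[->->]]; last by rewrite orbT.
    by rewrite rx px eqxx.
  + case/andP=> ry /orP[/eqP pz|pz]; last by rewrite ry pz orbT.
    by rewrite (inj y x) ?eqxx // pz px.
- by rewrite /= ss.
Qed.

Lemma has_uniq (K : fieldType) (q : {poly K}) N1 N2 :
  has_nonzero_roots q N1 -> has_nonzero_roots q N2 -> N1 = N2.
Proof.
case=> s1 [u1 m1 <-] [s2 [u2 m2 <-]].
by apply/perm_size/uniq_perm => // x; rewrite m1 m2.
Qed.

Lemma count_nroots (F : finFieldType) (n : nat) : (0 < n)%N ->
  #|[pred w : F | w ^+ n == 1]| = gcdn n (#|F| - 1).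
Proof.
move=> n0.
set N := (#|F| - 1)%N.
have F1 := finNzRing_gt1 F.
have N0 : (0 < N)%N by rewrite /N subn_gt0.
have XN (x : F) : x != 0 -> x ^+ N = 1.
  move=> x0; have := expf_card x.
  rewrite -{1}(subnK (ltnW F1)) -/N addn1 exprSr => h.
  by apply: (mulIf x0); rewrite mul1r h.
have [z zN] : exists z : F, N.-primitive_root z.
  have : has N.-primitive_root (enum [pred x : F | x != 0]).
    apply: cyclic.has_prim_root => //.
    - by apply/allP=> x; rewrite mem_enum inE unity_rootE => /XN ->.
    - exact: enum_uniq.
    - by rewrite -cardE cardC1 /N subn1.
  by case/hasP=> z _ ?; exists z.
set d := gcdn n N.
have dN : (d %| N)%N by apply: dvdn_gcdr.
have d0 : (0 < d)%N by rewrite gcdn_gt0 n0.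
have zd := dvdn_prim_root zN dN.
set z' := z ^+ (N %/ d) in zd.
rewrite -(card_ord d) -(@card_codom _ _ (fun i : 'I_d => z' ^+ i)); last first.
  move=> i j /eqP; rewrite (eq_prim_root_expr zd) !modn_small //.
  by move/eqP/val_inj.
apply: eq_card => w; rewrite inE /=.
apply/idP/codomP.
- move/eqP=> wn.
  have [m mw mn] := prim_order_exists n0 wn.
  have wN : w ^+ N = 1.
    apply: XN; apply/negP=> /eqP w0; move: wn; rewrite w0.
    have /negbTE nn : n != 0%N by rewrite -lt0n.
    by rewrite expr0n nn => /eqP; rewrite eq_sym oner_eq0.
  have mN : (m %| N)%N by rewrite (prim_order_dvd mw) wN.
  have md : (m %| d)%N by rewrite dvdn_gcd mn mN.
  have wd : w ^+ d = 1 by apply/eqP; rewrite -(prim_order_dvd mw).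
  by have [i ->] := prim_rootP zd wd; exists i.
- case=> i ->; rewrite -exprM -(divnK (dvdn_gcdl n N)) -/d mulnA mulnC exprM.
  by rewrite (prim_expr_order zd) expr1n.
Qed.

Lemma count_R (F : finFieldType) (n : nat) (d : F) : (0 < n)%N -> d != 0 ->
  #|[pred z : F | z ^+ n == - d]| =
  if [exists y : F, y ^+ n == - d] then #|[pred w : F | w ^+ n == 1]| else 0%N.
Proof.
move=> n0 d0; case: existsP => [[z0 /eqP hz0]|nz].
  have z00 : z0 != 0.
    apply/negP=> /eqP z00; move: hz0; rewrite z00 expr0n.
    have /negbTE -> : n != 0%N by rewrite -lt0n.
    by move/eqP; rewrite eq_sym oppr_eq0 (negbTE d0).
  have inj : injective (fun w : F => w * z0) by apply: mulIf.
  rewrite -[#|[pred w : F | w ^+ n == 1]|](card_image inj); apply: eq_card => z; rewrite !inE.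
  apply/idP/imageP.
    move=> /eqP hz; exists (z / z0); last by rewrite divfK.
    by rewrite inE expr_div_n hz hz0 divff // oppr_eq0.
  case=> w; rewrite inE => /eqP hw ->.
  by rewrite exprMn hw hz0 mul1r.
apply: eq_card0 => z; rewrite inE; apply/negP=> h; apply: nz; exists z; exact: h.
Qed.

Section Val.
Variables (K : fieldType) (kappa : finFieldType) (D : cdvf K kappa).
Local Notation v := (val_v D).
Local Notation rd := (red D).
Local Notation A := (inA (val_v D)).
Local Notation pi := (unif D).

Lemma v1 : v 1 = 0.
Proof. have := @v_mul _ _ D 1 1 (oner_neq0 _) (oner_neq0 _); rewrite mulr1; lia. Qed.

Lemma vN1 : v (-1) = 0.
Proof.
have h : (-1 : K) != 0 by rewrite oppr_eq0 oner_eq0.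
have := @v_mul _ _ D (-1) (-1) h h; rewrite mulrNN mulr1 v1; lia.
Qed.

Lemma vN x : x != 0 -> v (- x) = v x.
Proof.
move=> x0; have h : (-1 : K) != 0 by rewrite oppr_eq0 oner_eq0.
by rewrite -mulN1r (v_mul D h x0) vN1 add0r.
Qed.

Lemma vX x k : x != 0 -> v (x ^+ k) = k%:Z * v x.
Proof.
move=> x0; elim: k => [|k IH]; first by rewrite expr0 v1 mul0r.
rewrite exprS (v_mul D x0 (expf_neq0 k x0)) IH; lia.
Qed.

Lemma vV x : x != 0 -> v (x^-1) = - v x.
Proof.
move=> x0; have := v_mul D x0 (invr_neq0 x0); rewrite divff // v1; lia.
Qed.

Lemma vge0 N : vge v 0 N. Proof. by left. Qed.

Lemma vge_le x N M : vge v x N -> M <= N -> vge v x M.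
Proof. by case=> [->|h] hM; [left|right; apply: le_trans h]. Qed.

Lemma vgeN x N : vge v x N -> vge v (- x) N.
Proof.
case=> [->|h]; first by rewrite oppr0; left.
have [->|x0] := eqVneq x 0; first by rewrite oppr0; left.
by right; rewrite vN.
Qed.

Lemma vgeD x y N : vge v x N -> vge v y N -> vge v (x + y) N.
Proof.
case=> [->|hx]; first by rewrite add0r.
case=> [->|hy]; first by rewrite addr0; right.
have [x0|x0] := eqVneq x 0; first by rewrite x0 add0r; right.
have [y0|y0] := eqVneq y 0; first by rewrite y0 addr0; right.
have [s0|s0] := eqVneq (x + y) 0; first by left.
right; apply: le_trans (v_add D x0 y0 s0).
by rewrite le_min hx.
Qed.

Lemma vgeB x y N : vge v x N -> vge v y N -> vge v (x - y) N.
Proof. by move=> hx hy; apply: vgeD => //; apply: vgeN. Qed.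

Lemma vgeM x y N M : vge v x N -> vge v y M -> vge v (x * y) (N + M).
Proof.
case=> [->|hx]; first by rewrite mul0r; left.
case=> [->|hy]; first by rewrite mulr0; left.
have [x0|x0] := eqVneq x 0; first by rewrite x0 mul0r; left.
have [y0|y0] := eqVneq y 0; first by rewrite y0 mulr0; left.
by right; rewrite (v_mul D x0 y0) lerD.
Qed.

Lemma vge_sum (m : nat) (P : pred 'I_m) (F : 'I_m -> K) N :
  (forall i, P i -> vge v (F i) N) -> vge v (\sum_(i | P i) F i) N.
Proof.
move=> h; elim/big_ind: _ => //; first exact: vge0.
by move=> x y; apply: vgeD.
Qed.

Lemma vge_self x : vge v x (v x). Proof. by right. Qed.

Lemma vge_strict x y : x != 0 -> vge v y (v x + 1) -> (x + y != 0) /\ v (x + y) = v x.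
Proof.
move=> x0 [->|hy]; first by rewrite addr0.
have [y0|y0] := eqVneq y 0; first by rewrite y0 addr0.
have s0 : x + y != 0.
  apply/negP=> /eqP s; have yx : y = - x by apply/eqP; rewrite -subr_eq0 opprK addrC s.
  by move: hy; rewrite yx vN //; lia.
split=> //.
have h1 := v_add D x0 y0 s0.
have h2 : Num.min (v x) (v y) = v x by apply/min_idPl; lia.
have ny0 : - y != 0 by rewrite oppr_eq0.
have h3 := v_add D s0 ny0; rewrite addrK in h3; have := h3 x0.
rewrite vN // h2 in h1 *.
move=> h4; apply/eqP; rewrite eq_le h1 andbT.
move: h4; rewrite ge_min; case/orP=> // h5.
by move: hy; lia.
Qed.


Lemma inAP x : A x <-> vge v x 0.
Proof.
rewrite /inA; split; first by case/orP=> [/eqP->|h]; [left|right].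
by case=> [->|h]; rewrite ?eqxx // h orbT.
Qed.

Lemma A0 : A 0. Proof. by rewrite /inA eqxx. Qed.
Lemma A1 : A 1. Proof. by rewrite /inA v1 lexx orbT. Qed.
Lemma AD x y : A x -> A y -> A (x + y).
Proof. by move=> /inAP hx /inAP hy; apply/inAP/vgeD. Qed.
Lemma AN x : A x -> A (- x).
Proof. by move=> /inAP hx; apply/inAP/vgeN. Qed.
Lemma AB x y : A x -> A y -> A (x - y).
Proof. by move=> hx hy; apply/AD/AN. Qed.
Lemma AM x y : A x -> A y -> A (x * y).
Proof. by move=> /inAP hx /inAP hy; apply/inAP; rewrite -[0]addr0; apply/vgeM. Qed.
Lemma AX x k : A x -> A (x ^+ k).
Proof. by move=> hx; elim: k => [|k IH]; rewrite ?expr0 ?A1 // exprS AM. Qed.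

Lemma red0 : rd 0 = 0.
Proof.
have := @red_add _ _ D 0 0 A0 A0; rewrite addr0 => h.
by have := congr1 (fun t => t - rd 0) h; rewrite subrr addrK.
Qed.

Lemma redN x : A x -> rd (- x) = - rd x.
Proof.
move=> hx; have := @red_add _ _ D x (- x) hx (AN hx).
rewrite subrr red0 => h.
by have := congr1 (fun t => t - rd x) h; rewrite add0r addrC addKr.
Qed.

Lemma redB x y : A x -> A y -> rd (x - y) = rd x - rd y.
Proof. by move=> hx hy; rewrite red_add ?AN // redN. Qed.

Lemma red_vge1 x : A x -> vge v x 1 -> rd x = 0.
Proof. by move=> hx h; apply: (proj2 (red_ker hx)). Qed.

Lemma redX x k : A x -> rd (x ^+ k) = rd x ^+ k.
Proof.
move=> hx; elim: k => [|k IH]; first by rewrite !expr0 red_1.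
by rewrite !exprS red_mul ?AX // IH.
Qed.

Lemma red_sum (m : nat) (F : 'I_m -> K) :
  (forall i, A (F i)) -> A (\sum_i F i) /\ rd (\sum_i F i) = \sum_i rd (F i).
Proof.
move=> h; apply: (big_ind2 (fun x y => A x /\ rd x = y)).
- by rewrite A0 red0.
- by move=> x1 x2 y1 y2 [h1 <-] [h2 <-]; rewrite AD // red_add.
- by move=> i _; split.
Qed.


Section Hensel.
Variables (N : nat) (b : nat -> K).
Hypothesis hb : forall i, A (b i).

Definition Fv y := \sum_(i < N) b i * y ^+ i.
Definition Qv y z := \sum_(i < N) b i * \sum_(j < i) z ^+ (i.-1 - j) * y ^+ j.
Definition rFv (t : kappa) := \sum_(i < N) rd (b i) * t ^+ i.
Definition rQv (t : kappa) := \sum_(i < N) rd (b i) * (t ^+ i.-1 *+ i).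

Lemma FvQ y z : Fv z - Fv y = (z - y) * Qv y z.
Proof.
rewrite /Fv /Qv -sumrB mulr_sumr; apply: eq_bigr => i _.
by rewrite -mulrBr subrXX mulrCA.
Qed.

Lemma AFv y : A y -> A (Fv y) /\ rd (Fv y) = rFv (rd y).
Proof.
move=> hy.
have hF : forall i : 'I_N, A (b i * y ^+ i) by move=> i; rewrite AM ?AX.
have [h1 h2] := red_sum hF; split=> //; rewrite /Fv h2 /rFv.
by apply: eq_bigr => i _; rewrite red_mul ?AX // redX.
Qed.

Lemma AQv y z : A y -> A z -> rd y = rd z ->
  A (Qv y z) /\ rd (Qv y z) = rQv (rd y).
Proof.
move=> hy hz yz.
have hI : forall i : nat, forall j : 'I_i, A (z ^+ (i.-1 - j) * y ^+ j).
  by move=> i j; rewrite AM ?AX.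
have hF : forall i : 'I_N, A (b i * \sum_(j < i) z ^+ (i.-1 - j) * y ^+ j).
  by move=> i; rewrite AM // (red_sum (hI i)).1.
have [h1 h2] := red_sum hF; split=> //; rewrite /Qv h2 /rQv.
apply: eq_bigr => i _; rewrite red_mul //; last by rewrite (red_sum (hI i)).1.
congr (_ * _); rewrite (red_sum (hI i)).2.
transitivity (\sum_(j < i) rd y ^+ i.-1); last by rewrite sumr_const card_ord.
apply: eq_bigr => j _.
rewrite red_mul ?AX // !redX // -yz -exprD subnK //.
have := ltn_ord j; lia.
Qed.

Lemma hensel_uniq y1 y2 : A y1 -> A y2 -> Fv y1 = 0 -> Fv y2 = 0 ->
  rd y1 = rd y2 -> rQv (rd y1) != 0 -> y1 = y2.
Proof.
move=> h1 h2 F1 F2 e hc.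
have := FvQ y1 y2; rewrite F1 F2 subrr => /esym/eqP.
rewrite mulf_eq0 subr_eq0 => /orP[/eqP->//|/eqP q0].
have [_ h] := AQv h1 h2 e; rewrite q0 red0 in h.
by rewrite -h eqxx in hc.
Qed.

Lemma hensel_exists t : rFv t = 0 -> rQv t != 0 ->
  exists y, [/\ A y, rd y = t & Fv y = 0].
Proof.
move=> ht hc.
have [u hu ru] := @red_surj _ _ D (rQv t)^-1.
have [y0 hy0 ry0] := @red_surj _ _ D t.
pose ys := fix ys k := if k is k'.+1 then ys k' - Fv (ys k') * u else y0.
have ysS k : ys k.+1 = ys k - Fv (ys k) * u by [].
have inv : forall k, [/\ A (ys k), rd (ys k) = t & vge v (Fv (ys k)) k.+1%:Z].
  elim=> [|k [hk rk vk]].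
    have [hA hr] := AFv hy0; split=> //.
    by apply: (proj1 (red_ker hA)); rewrite hr ry0 ht.
  have hFu : A (Fv (ys k) * u) by rewrite AM // (AFv hk).1.
  have vFu : vge v (Fv (ys k) * u) k.+1%:Z.
    by rewrite -[k.+1%:Z]addr0; apply: vgeM => //; apply/inAP.
  have hA' : A (ys k.+1) by rewrite ysS AB.
  have rd' : rd (ys k.+1) = t.
    rewrite ysS redB // (red_vge1 hFu) ?subr0 //.
    by apply: vge_le vFu _; lia.
  split=> //.
  have [hQ rQ] := AQv hk hA' (etrans rk (esym rd')).
  have eqF : Fv (ys k.+1) = Fv (ys k) * (1 - u * Qv (ys k) (ys k.+1)).
    rewrite -[Fv (ys k.+1)](subrK (Fv (ys k))) FvQ.
    rewrite {1}ysS addrAC subrr add0r mulrBr mulr1 mulNr -mulrA addrC //.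
  have h1 : A (1 - u * Qv (ys k) (ys k.+1)) by rewrite AB ?A1 ?AM.
  have v1' : vge v (1 - u * Qv (ys k) (ys k.+1)) 1.
    apply: (proj1 (red_ker h1)).
    by rewrite redB ?A1 ?AM // red_1 red_mul // ru rQ rk mulVf // subrr.
  rewrite eqF; apply: vge_le (vgeM vk v1') _; lia.
have step k : vge v (ys k.+1 - ys k) k.+1%:Z.
  rewrite ysS addrAC subrr add0r; apply: vgeN.
  have [hk _ vk] := inv k.
  by rewrite -[k.+1%:Z]addr0; apply: vgeM => //; apply/inAP.
have cauchy M j : vge v (ys (M + j)%N - ys M) M.+1%:Z.
  elim: j => [|j IH]; first by rewrite addn0 subrr; apply: vge0.
  rewrite addnS.
  have -> : ys (M + j).+1 - ys M = (ys (M + j).+1 - ys (M + j)%N) + (ys (M + j)%N - ys M).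
    by rewrite addrA subrK.
  apply: vgeD => //.
  by apply: vge_le (step _) _; lia.
have [L hL] : exists L : K, forall N0 : int, exists M : nat, forall n : nat, (M <= n)%N ->
        vge v (ys n - L) N0.
  apply: (@complete _ _ D) => N0; exists `|N0|%N => m n hm hn.
  rewrite -(subnKC hm) -(subnKC hn).
  rewrite -[X in X - _](subrK (ys `|N0|%N)) -[X in _ - X](subrK (ys `|N0|%N)).
  rewrite opprD addrACA subrr addr0; apply: vgeB.
    by apply: vge_le (cauchy _ _) _; lia.
  by apply: vge_le (cauchy _ _) _; lia.
have [M0 hM0] := hL 1.
have [hy rY _] := inv M0.
have vd := hM0 M0 (leqnn _).
have hd : A (ys M0 - L) by apply/inAP; apply: vge_le vd _.
have LA : A L by rewrite -[L](subKr (ys M0)) AB.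
have rL : rd L = t.
  by rewrite -[L](subKr (ys M0)) redB // (red_vge1 hd vd) subr0.
exists L; split=> //.
have [//|F0] := eqVneq (Fv L) 0.
set w := v (Fv L).
have [M1 hM1] := hL (w + 1).
pose n := maxn M1 (absz (w + 1)).
have [hn rn vn] := inv n.
have [hQ _] := AQv LA hn (etrans rL (esym rn)).
have eq : Fv L = Fv (ys n) - (ys n - L) * Qv L (ys n).
  by rewrite -FvQ opprB addrC subrK.
have : vge v (Fv L) (w + 1).
  rewrite eq; apply: vgeB.
    by apply: vge_le vn _; rewrite /n; lia.
  rewrite -[w + 1]addr0; apply: vgeM; last by apply/inAP.
  by apply: hM1; rewrite /n leq_maxl.
case=> [/eqP|]; first by rewrite (negbTE F0).
rewrite /w; lia.
Qed.

End Hensel.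


Lemma sum_unique (m : nat) (F : 'I_m -> K) (i0 : 'I_m) : F i0 != 0 ->
  (forall i, i != i0 -> vge v (F i) (v (F i0) + 1)) -> \sum_i F i != 0.
Proof.
move=> h0 h; rewrite (bigD1 i0) //=.
by have [] := vge_strict h0 (vge_sum h).
Qed.

Section Poly.
Variables (p n : nat) (f : {poly K}).
Hypotheses (hp : p \in [pchar kappa]) (n1 : (1 <= n)%N) (pn : ~~ (p %| n)%N)
  (fm : f \is monic) (fs : size f = n.+1) (fA : forall i, A f`_i) (f0 : f`_0 != 0)
  (fmid : forall i : nat, (1 <= i <= n.-1)%N -> f`_(n - i) != 0 ->
     (i%:Z * v f`_0 < n%:Z * v f`_(n - i))).

Lemma fn1 : f`_n = 1.
Proof. by move/monicP: fm; rewrite lead_coefE fs. Qed.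

Lemma fmid' i : (0 < i < n)%N -> f`_i != 0 -> ((n - i)%:Z * v f`_0 < n%:Z * v f`_i).
Proof.
move=> /andP[i0 iN] h.
have := @fmid (n - i); rewrite subKn ?(ltnW iN) //; apply => //.
apply/andP; split; lia.
Qed.

Lemma l0 : 0 <= v f`_0.
Proof. by move: (fA 0); rewrite /inA (negbTE f0). Qed.

Lemma hornerf (x : K) : f.[x] = \sum_(i < n.+1) f`_i * x ^+ i.
Proof. by rewrite horner_coef fs. Qed.

Lemma term_v (x : K) i : x != 0 -> f`_i != 0 -> v (f`_i * x ^+ i) = v f`_i + i%:Z * v x.
Proof. by move=> x0 fi; rewrite (v_mul D fi (expf_neq0 _ x0)) vX. Qed.

Lemma ltn_max (i : 'I_n.+1) : i != ord_max -> (i < n)%N.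
Proof.
move=> h; rewrite ltn_neqAle -ltnS ltn_ord andbT.
by apply: contra h => /eqP e; apply/eqP/val_inj.
Qed.

Lemma root_val (x : K) : x != 0 -> root f x -> n%:Z * v x = v f`_0.
Proof.
move=> x0 /rootP; rewrite hornerf => hr.
have [lt|gt|//] := ltrgtP (n%:Z * v x) (v f`_0).
- have : \sum_(i < n.+1) f`_i * x ^+ i != 0; last by rewrite hr eqxx.
  apply: (@sum_unique _ _ ord_max) => /=.
    by rewrite fn1 mul1r expf_neq0.
  move=> i ii0; rewrite fn1 mul1r vX //.
  have [->|fi0] := eqVneq f`_i 0; first by rewrite mul0r; left.
  right; rewrite term_v //.
  have iN := ltn_max ii0.
  have [i0|ipos] := posnP i.
    rewrite i0 mul0r addr0; lia.
  have := fmid' (i:=i) _ fi0; rewrite ipos iN => /(_ isT) h; nia.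
- have : \sum_(i < n.+1) f`_i * x ^+ i != 0; last by rewrite hr eqxx.
  apply: (@sum_unique _ _ ord0) => /=.
    by rewrite expr0 mulr1.
  move=> i ii0; rewrite expr0 mulr1.
  have [->|fi0] := eqVneq f`_i 0; first by rewrite mul0r; left.
  right; rewrite term_v //.
  have ipos : (0 < i)%N by rewrite lt0n; apply: contra ii0 => /eqP e; apply/eqP/val_inj.
  have [im|iN] := eqVneq i ord_max.
    rewrite im /= fn1 v1 add0r; move: gt; set L := v f`_0; lia.
  have iN' := ltn_max iN.
  have := fmid' (i:=i) _ fi0; rewrite ipos iN' => /(_ isT) h.
  move: gt h; set L := v f`_0; set V := v f`_i; set t := v x; nia.
Qed.

Lemma part2 : ~~ (n%:Z %| v f`_0)%Z -> has_nonzero_roots f 0.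
Proof.
move=> nd; exists [::]; split=> // x; rewrite in_nil; apply/esym/negbTE/negP.
case/andP=> x0 rx; apply: (negP nd); rewrite -(root_val x0 rx).
exact: dvdz_mulr (dvdzz _).
Qed.

Lemma part3 : (n%:Z %| v f`_0)%Z -> delta D f`_0 != 0 /\
  has_nonzero_roots f #|[pred z : kappa | z ^+ n == - delta D f`_0]|.
Proof.
move=> /dvdzP [q hq].
have q0 : 0 <= q by move: l0; rewrite hq; nia.
set m := absz q.
have hl : v f`_0 = (n * m)%N%:Z by rewrite hq /m; lia.
pose pm := pi ^+ m; pose pl := pi ^+ (n * m).
have pi0 : pi != 0 := unif_neq0 D.
have pm0 : pm != 0 by rewrite expf_neq0.
have pl0 : pl != 0 by rewrite expf_neq0.
pose b i := f`_i * pi ^+ (m * i) / pl.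
have key y : f.[pm * y] = pl * Fv n.+1 b y.
  rewrite hornerf /Fv mulr_sumr; apply: eq_bigr => i _.
  rewrite /b exprMn -exprM [RHS]mulrC -!mulrA; congr (_ * _); congr (_ * _).
  by rewrite mulrC mulfK.
have vpl : v pl = (n * m)%N%:Z by rewrite vX // v_unif mulr1.
have vpi k : v (pi ^+ k) = k%:Z by rewrite vX // v_unif mulr1.
have b0 : rd (b 0) = delta D f`_0.
  rewrite /b /delta hl muln0 expr0 mulr1 //.
have b00 : b 0 != 0 by rewrite /b mulf_neq0 ?invr_neq0 // mulf_neq0 // expf_neq0.
have vb0 : v (b 0) = 0.
  rewrite /b muln0 expr0 mulr1 (v_mul D f0 (invr_neq0 pl0)) vV // vpl hl; lia.
have bn : b n = 1 by rewrite /b fn1 mul1r mulnC divff.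
have bmid i : (0 < i < n)%N -> vge v (b i) 1.
  move=> hi; have [fi0|fi0] := eqVneq f`_i 0; first by rewrite /b fi0 !mul0r; left.
  have hm := fmid' hi fi0.
  right; rewrite /b (v_mul D _ (invr_neq0 pl0)); last by rewrite mulf_neq0 ?expf_neq0.
  rewrite (v_mul D fi0 (expf_neq0 _ pi0)) vV // vpl vpi.
  move: hm; rewrite hl; set V := v f`_i; nia.
have bbig i : (n < i)%N -> b i = 0.
  by move=> hi; rewrite /b nth_default ?fs // !mul0r.
have hb i : A (b i).
  have [->|i0] := posnP i; first by apply/inAP; right; rewrite vb0.
  have [iN|iN|->] := ltngtP i n.
  - by apply/inAP; apply: vge_le (bmid _ _) _; rewrite ?i0 ?iN.
  - by rewrite bbig ?A0.
  - by rewrite bn A1.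
have rb i : (0 < i < n)%N -> rd (b i) = 0 by move=> hi; apply: red_vge1 (hb i) (bmid i hi).
set dl := delta D f`_0 in b0 *.
have d0 : dl != 0.
  rewrite -b0; apply/negP => /eqP /(red_ker (hb 0)) [|]; first by apply/eqP.
  by rewrite vb0.
have ord0m : (ord0 : 'I_n.+1) != ord_max by rewrite -val_eqE /= eq_sym -lt0n.
have mid (i : 'I_n.+1) : i != ord_max -> i != ord0 -> (0 < i < n)%N.
  move=> h1 h2; rewrite ltn_max // andbT lt0n.
  by apply: contra h2 => /eqP e; apply/eqP/val_inj.
have rF t : rFv n.+1 b t = t ^+ n + dl.
  rewrite /rFv (bigD1 ord_max) //= (bigD1 ord0) //= big1 ?addr0.
    by rewrite bn red_1 mul1r b0 expr0 mulr1.
  by move=> i /andP[h1 h2]; rewrite rb ?mul0r ?mid.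
have rQ t : rQv n.+1 b t = t ^+ n.-1 *+ n.
  rewrite /rQv (bigD1 ord_max) //= big1 ?addr0 ?bn ?red_1 ?mul1r //.
  move=> i h1; have [i0|i0] := eqVneq i ord0; first by rewrite i0 /= mulr0n mulr0.
  by rewrite rb ?mul0r ?mid.
have rQ0 t : t != 0 -> rQv n.+1 b t != 0.
  move=> t0; rewrite rQ -mulr_natr mulf_neq0 ?expf_neq0 //.
  by rewrite -(dvdn_pcharf hp).
have ypr x : x != 0 -> root f x -> [/\ A (x / pm), rd (x / pm) ^+ n == - dl
     & Fv n.+1 b (x / pm) = 0].
  move=> x0 rx.
  have vx : v x = m%:Z by have := root_val x0 rx; rewrite hl; nia.
  have hA : A (x / pm).
    apply/inAP; right; rewrite (v_mul D x0 (invr_neq0 pm0)) vV // vx vpi; lia.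
  have F0 : Fv n.+1 b (x / pm) = 0.
    have := key (x / pm); rewrite mulrC divfK // (rootP rx) => /esym/eqP.
    by rewrite mulf_eq0 (negbTE pl0) => /eqP.
  split=> //; have [_ hr] := AFv n.+1 hb hA.
  by rewrite -addr_eq0 -rF -hr F0 red0.
split=> //.
apply: (@enum_lift _ _ (fun x => (x != 0) && root f x) (fun x => rd (x / pm))).
- move=> z /= /eqP hz.
  have z0 : z != 0.
    apply/negP=> /eqP z0; move: hz; rewrite z0 expr0n.
    have /negbTE -> : n != 0%N by rewrite -lt0n.
    by move/eqP; rewrite eq_sym oppr_eq0 (negbTE d0).
  have hF : rFv n.+1 b z = 0 by rewrite rF hz addNr.
  have [y [hy ry Fy]] := hensel_exists hb hF (rQ0 _ z0).
  exists (pm * y); split; last by rewrite [pm * y]mulrC mulfK.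
  have y0 : y != 0 by apply: contra z0 => /eqP y0; rewrite -ry y0 red0.
  by rewrite mulf_neq0 //=; apply/rootP; rewrite key Fy mulr0.
- move=> x1 x2 /andP[x10 r1] /andP[x20 r2] /= e.
  have [h1 d1 F1] := ypr _ x10 r1.
  have [h2 d2 F2] := ypr _ x20 r2.
  have nz : rd (x1 / pm) != 0.
    apply/negP=> /eqP z0; move: d1; rewrite z0 expr0n.
    have /negbTE -> : n != 0%N by rewrite -lt0n.
    by rewrite eq_sym oppr_eq0 (negbTE d0).
  have := hensel_uniq (N:=n.+1) hb h1 h2 F1 F2 e (rQ0 _ nz).
  by move/(congr1 (fun t => t * pm)); rewrite !divfK.
- by move=> x /andP[x0 rx]; have [] := ypr _ x0 rx.
Qed.

End Poly.

End Val.

Unset Implicit Arguments.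

Theorem theorem4p5 (K : fieldType) (kappa : finFieldType) (D : cdvf K kappa)
    (p : nat) (n : nat) (f : {poly K}) :
  p \in [pchar kappa] ->
  (1 <= n)%N -> ~~ (p %| n)%N ->
  f \is monic -> size f = n.+1 ->
  (forall i, inA (val_v D) f`_i) ->
  f`_0 != 0 ->
  (forall i : nat, (1 <= i <= n.-1)%N -> f`_(n - i) != 0 ->
     (i%:Z * val_v D f`_0 < n%:Z * val_v D f`_(n - i))%R) ->
  let l := val_v D f`_0 in
  let g := 'X^n + (f`_0)%:P in
  [/\ forall N : nat, has_nonzero_roots f N <-> has_nonzero_roots g N,
      ~~ (n%:Z %| l)%Z -> has_nonzero_roots f 0
    & (n%:Z %| l)%Z ->
      has_nonzero_roots f
        (if [exists y : kappa, y ^+ n == - delta D f`_0]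
         then gcdn n (#|kappa| - 1) else 0%N)].
Proof.
move=> hp n1 pn fm fs fA f0 fmid l g.
pose R := if (n%:Z %| l)%Z then
   (if [exists y : kappa, y ^+ n == - delta D f`_0]
         then gcdn n (#|kappa| - 1) else 0%N) else 0%N.
have cnt : forall h : {poly K}, h \is monic -> size h = n.+1 ->
    (forall i, inA (val_v D) h`_i) -> h`_0 = f`_0 ->
    (forall i : nat, (1 <= i <= n.-1)%N -> h`_(n - i) != 0 ->
     (i%:Z * val_v D h`_0 < n%:Z * val_v D h`_(n - i))%R) ->
    has_nonzero_roots h R.
  move=> h hm hs hA h0 hmid; have h0' : h`_0 != 0 by rewrite h0.
  rewrite /R /l; case: ifP => hd.
    have hd' : (n%:Z %| val_v D h`_0)%Z by rewrite h0.
    have [d0 H] := part3 hp n1 pn hm hs hA h0' hmid hd'.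
    by rewrite -h0 -count_nroots // -(count_R n1 d0).
  by apply: (part2 hp n1 pn hm hs h0' hmid); rewrite h0 hd.
have Hf := cnt f fm fs fA erefl fmid.
have g0 : g`_0 = f`_0.
  have /negbTE nn : 0%N != n by rewrite eq_sym -lt0n.
  by rewrite /g coefD coefXn coefC eqxx nn add0r.
have Hg : has_nonzero_roots g R.
  apply: cnt => //.
  - exact: monicXnaddC.
  - exact: size_XnaddC.
  - move=> i; rewrite /g coefD coefXn coefC.
    case: (i == n); case: (i == 0%N); rewrite ?add0r ?addr0 ?fA ?A1 ?A0 //.
    by apply: AD; rewrite ?A1.
  - move=> i /andP[i1 i2]; rewrite /g coefD coefXn coefC.
    have /negbTE -> : (n - i)%N != n by lia.
    have /negbTE -> : (n - i)%N != 0%N by lia.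
    by rewrite add0r eqxx.
split.
- move=> N; split=> H.
    by rewrite -(has_uniq Hf H).
  by rewrite -(has_uniq Hg H).
- by move=> nd; move: Hf; rewrite /R (negbTE nd).
- by move=> hd; move: Hf; rewrite /R hd.
Qed.
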